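(* Let $X,Y$ be exponential vector spaces over a field $K$ and $\phi:X\to Y$ an order-isomorphism. Then (1) for any generator $B$ of $X\smallsetminus X_0$, $\phi(B)$ is a generator of $Y\smallsetminus Y_0$; (2) for any orderly independent subset $B$ of $X\smallsetminus X_0$, $\phi(B)$ is an orderly independent subset of $Y\smallsetminus Y_0$. Consequently, for any basis $B$ of $X\smallsetminus X_0$, $\phi(B)$ is a basis of $Y\smallsetminus Y_0$.
   Context: An exponential vector space (evs) over a field $K$ is a partially ordered set $(X,\leq)$ with a binary operation $+$ on $X$ and a map $K\times X\to X$, $(\alpha,x)\mapsto \alpha x$, such that: (A1) $(X,+)$ is a commutative semigroup with identity $\theta$; (A2) $x\leq y$ implies $x+z\leq y+z$ and $\alpha x\leq \alpha y$ for all $z\in X$, $\alpha\in K$; (A3) $\alpha(x+y)=\alpha x+\alpha y$, $\alpha(\beta x)=(\alpha\beta)x$, $(\alpha+\beta)x\leq \alpha x+\beta x$, $1x=x$; (A4) $\alpha x=\theta$ iff $\alpha=0$ or $x=\theta$; (A5) $x+(-1)x=\theta$ iff $x\in X_0$, where $X_0:=\{z\in X: y\not\leq z \text{ for all } y\in X\smallsetminus\{z\}\}$ (the set of minimal elements, called the primitive space); (A6) for each $x\in X$ there is $p\in X_0$ with $p\leq x$. An order-morphism $f:X\to Y$ is a map with $f(x+y)=f(x)+f(y)$, $f(\alpha x)=\alpha f(x)$, $x\leq y\Rightarrow f(x)\leq f(y)$, and such that for $p,q\in f(X)$ with $p\leq q$ one has $f^{-1}(p)\subseteq\{z: z\leq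 w \text{ for some } w\in f^{-1}(q)\}$ and $f^{-1}(q)\subseteq\{z: z\geq w \text{ for some } w\in f^{-1}(p)\}$; an order-isomorphism is a bijective order-morphism. For $x\in X\smallsetminus X_0$ let $L(x):=\{z\in X: z\geq \alpha x+p \text{ for some } \alpha\in K\smallsetminus\{0\},\ p\in X_0\}$ (similarly in $Y$ with $Y_0$). A subset $B\subseteq X\smallsetminus X_0$ generates $X\smallsetminus X_0$ if $X\smallsetminus X_0=\bigcup_{b\in B}L(b)$. Elements $x,y\in X\smallsetminus X_0$ are orderly dependent if $x\in L(y)$ or $y\in L(x)$, and orderly independent otherwise; $B$ is orderly independent if any two distinct members of $B$ are orderly independent. A basis of $X\smallsetminus X_0$ is an orderly independent generating subset of $X\smallsetminus X_0$. *)

(* Defs.v *)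
From mathcomp Require Import all_boot all_algebra.
Set Implicit Arguments. Unset Strict Implicit. Unset Printing Implicit Defensive.
Import GRing.Theory.
Local Open Scope ring_scope.

Record evs (K : fieldType) := EVS {
  ev_carrier :> Type;
  ev_le : ev_carrier -> ev_carrier -> Prop;
  ev_add : ev_carrier -> ev_carrier -> ev_carrier;
  ev_zero : ev_carrier;
  ev_smul : K -> ev_carrier -> ev_carrier;
  ev_le_refl : forall x, ev_le x x;
  ev_le_antisym : forall x y, ev_le x y -> ev_le y x -> x = y;
  ev_le_trans : forall x y z, ev_le x y -> ev_le y z -> ev_le x z;
  ev_addA : forall x y z, ev_add x (ev_add y z) = ev_add (ev_add x y) z;
  ev_addC : forall x y, ev_add x y = ev_add y x;
  ev_add0 : forall x, ev_add x ev_zero = x;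
  ev_le_add : forall x y z, ev_le x y -> ev_le (ev_add x z) (ev_add y z);
  ev_le_smul : forall (a : K) x y, ev_le x y -> ev_le (ev_smul a x) (ev_smul a y);
  ev_smulD : forall (a : K) x y,
      ev_smul a (ev_add x y) = ev_add (ev_smul a x) (ev_smul a y);
  ev_smulA : forall (a b : K) x, ev_smul a (ev_smul b x) = ev_smul (a * b) x;
  ev_smul_addK : forall (a b : K) x,
      ev_le (ev_smul (a + b) x) (ev_add (ev_smul a x) (ev_smul b x));
  ev_smul1 : forall x, ev_smul 1 x = x;
  ev_smul_eq0 : forall (a : K) x, ev_smul a x = ev_zero <-> (a = 0 \/ x = ev_zero);
  ev_prim_iff : forall x,
      ev_add x (ev_smul (-1) x) = ev_zero <-> (forall y, ev_le y x -> y = x);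
  ev_prim_below : forall x, exists p,
      (forall y, ev_le y p -> y = p) /\ ev_le p x
}.

Section EVSDefs.
Variable K : fieldType.

(* primitive space X_0 : minimal elements *)
Definition prim (X : evs K) (z : X) : Prop :=
  forall y : X, ev_le y z -> y = z.

Definition Lset (X : evs K) (x z : X) : Prop :=
  exists a : K, a <> 0 /\ exists p : X, prim p /\ ev_le (ev_add (ev_smul a x) p) z.

Definition generates (X : evs K) (B : X -> Prop) : Prop :=
  (forall b, B b -> ~ prim b) /\
  (forall z : X, ~ prim z <-> exists b, B b /\ Lset b z).

Definition orderly_dependent (X : evs K) (x y : X) : Prop :=
  Lset y x \/ Lset x y.

Definition orderly_independent (X : evs K) (B : X -> Prop) : Prop :=
  (forall b, B b -> ~ prim b) /\
  (forall x y, B x -> B y -> x <> y -> ~ orderly_dependent x y).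

Definition is_basis (X : evs K) (B : X -> Prop) : Prop :=
  orderly_independent B /\ generates B.

Definition order_morphism (X Y : evs K) (f : X -> Y) : Prop :=
  (forall x y, f (ev_add x y) = ev_add (f x) (f y)) /\
  (forall (a : K) x, f (ev_smul a x) = ev_smul a (f x)) /\
  (forall x y, ev_le x y -> ev_le (f x) (f y)) /\
  (forall p q : Y, (exists x, f x = p) -> (exists x, f x = q) -> ev_le p q ->
     (forall z, f z = p -> exists w, f w = q /\ ev_le z w) /\
     (forall z, f z = q -> exists w, f w = p /\ ev_le w z)).

Definition order_isomorphism (X Y : evs K) (f : X -> Y) : Prop :=
  order_morphism f /\ bijective f.

Definition img_set (X Y : Type) (f : X -> Y) (B : X -> Prop) : Y -> Prop :=
  fun y => exists b, B b /\ f b = y.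

End EVSDefs.

(* Main.v *)
Require Import Defs.
From mathcomp Require Import all_boot all_algebra.

Set Implicit Arguments. Unset Strict Implicit.
Section Aux.
Variables (K : fieldType) (X Y : evs K) (phi : X -> Y).
Hypothesis hphi : order_isomorphism phi.

Lemma phi_inj : injective phi.
Proof. case: hphi => _ hb; exact: bij_inj. Qed.

Lemma phi_surj : forall y : Y, exists x, phi x = y.
Proof. case: hphi => _ [g _ hg] y; exists (g y); exact: hg. Qed.

Lemma phi_le x y : ev_le x y -> ev_le (phi x) (phi y).
Proof. case: hphi => [[_ [_ [H _]]] _]; exact: H. Qed.

Lemma phi_le_rev x y : ev_le (phi x) (phi y) -> ev_le x y.
Proof.
case: hphi => [[_ [_ [_ H]]] _] hle.
have [H1 _] := H (phi x) (phi y) (ex_intro _ x erefl) (ex_intro _ y erefl) hle.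
have [w [hw hxw]] := H1 x erefl.
by rewrite -(phi_inj hw).
Qed.

Lemma phi_add x y : phi (ev_add x y) = ev_add (phi x) (phi y).
Proof. case: hphi => [[H _] _]; exact: H. Qed.

Lemma phi_smul a x : phi (ev_smul a x) = ev_smul a (phi x).
Proof. case: hphi => [[_ [H _]] _]; exact: H. Qed.

Lemma phi_prim x : prim x <-> prim (phi x).
Proof.
split.
- move=> hp y hy. have [y0 hy0] := phi_surj y. subst y.
  by rewrite (hp y0 (phi_le_rev hy)).
- move=> hp y hy. apply: phi_inj. exact: hp (phi_le hy).
Qed.

Lemma phi_L b z : Lset b z <-> Lset (phi b) (phi z).
Proof.
split.
- move=> [a [ha [p [hp hle]]]]. exists a; split => //. exists (phi p); split.
  + by apply/phi_prim.
  + by rewrite -phi_smul -phi_add; apply: phi_le.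
- move=> [a [ha [p [hp hle]]]]. exists a; split => //.
  have [p0 hp0] := phi_surj p. subst p.
  exists p0; split.
  + by apply/phi_prim.
  + apply: phi_le_rev. by rewrite phi_add phi_smul.
Qed.

End Aux.
Unset Implicit Arguments.

Theorem mainTheorem20 (K : fieldType) (X Y : evs K) (phi : X -> Y)
  (hphi : order_isomorphism phi) :
  (forall B : X -> Prop, generates B -> generates (img_set phi B)) /\
  (forall B : X -> Prop, orderly_independent B -> orderly_independent (img_set phi B)) /\
  (forall B : X -> Prop, is_basis B -> is_basis (img_set phi B)).
Proof.
have G : forall B : X -> Prop, generates B -> generates (img_set phi B).
  move=> B [H1 H2]; split.
  - move=> b [b0 [hb0 <-]] hp. apply: (H1 b0 hb0). by apply/(phi_prim hphi).
  - move=> z. have [z0 <-] := phi_surj hphi z. split.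
    + move=> hnp. have [|b [hb hL]] := (proj1 (H2 z0)).
        by move=> hp; apply: hnp; apply/(phi_prim hphi).
      exists (phi b); split; first by exists b.
      by apply/(phi_L hphi).
    + move=> [b [[b0 [hb0 <-]] hL]] hp.
      have : ~ prim z0 by apply/(H2 z0); exists b0; split => //; apply/(phi_L hphi).
      by apply; apply/(phi_prim hphi).
have I : forall B : X -> Prop, orderly_independent B -> orderly_independent (img_set phi B).
  move=> B [H1 H2]; split.
  - move=> b [b0 [hb0 <-]] hp. apply: (H1 b0 hb0). by apply/(phi_prim hphi).
  - move=> x y [x0 [hx0 <-]] [y0 [hy0 <-]] hne hd.
    apply: (H2 x0 y0 hx0 hy0); first by move=> e; apply: hne; rewrite e.
    case: hd => h; [left|right]; by apply/(phi_L hphi).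
split; first exact: G. split; first exact: I.
by move=> B [hi hg]; split; [apply: I | apply: G].
Qed.
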